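(* Let $q\ge2$. If $f$ is a $q$-quasiadditive function, then $f(0)=0$ and $f(qa)=f(a)$ for all nonnegative integers $a$. If $f$ is a $q$-quasimultiplicative function, then $f(0)=1$ unless $f$ is identically $0$, and $f(qa)=f(a)$ for all nonnegative integers $a$.
   Context: A function $f$ on the nonnegative integers is $q$-quasiadditive if there is a nonnegative integer $r$ such that $f(q^{k+r}a+b)=f(a)+f(b)$ for all nonnegative integers $a,b,k$ with $0\le b<q^k$; it is $q$-quasimultiplicative if there is a nonnegative integer $r$ such that $f(q^{k+r}a+b)=f(a)f(b)$ for all such $a,b,k$. *)

(* Defs.v *)
From mathcomp Require Import all_boot all_algebra.
Set Implicit Arguments. Unset Strict Implicit. Unset Printing Implicit Defensive.
Import GRing.Theory.
Local Open Scope ring_scope.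

Definition quasiadditive (R : fieldType) (q : nat) (f : nat -> R) : Prop :=
  exists r : nat, forall a b k : nat, (b < q ^ k)%N ->
    f (q ^ (k + r) * a + b)%N = f a + f b.

Definition quasimultiplicative (R : fieldType) (q : nat) (f : nat -> R) : Prop :=
  exists r : nat, forall a b k : nat, (b < q ^ k)%N ->
    f (q ^ (k + r) * a + b)%N = f a * f b.

(* Main.v *)
Require Import Defs.
From mathcomp Require Import all_boot all_algebra.
Local Open Scope ring_scope.
Import GRing.Theory.

Lemma ltn_expn (q n : nat) : (2 <= q)%N -> (n < q ^ n)%N.
Proof.
move=> hq; elim: n => [|n IH]; first by rewrite expn0.
rewrite expnS; apply: (@leq_trans (2 * q ^ n)%N).
  have : (1 <= q ^ n)%N by rewrite expn_gt0 (leq_trans _ hq).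
  move: IH; rewrite mul2n -addnn => IH h1.
  move: IH h1; set m := (q ^ n)%N; move=> IH h1.
  by rewrite -(addn1 n) -addSn; apply: leq_add.
by rewrite leq_mul2r hq orbT.
Qed.

Theorem lemma6 (R : fieldType) (q : nat) (hq : (2 <= q)%N) :
  (forall f : nat -> R, quasiadditive q f ->
     f 0%N = 0 /\ (forall a : nat, f (q * a)%N = f a)) /\
  (forall f : nat -> R, quasimultiplicative q f ->
     ((exists n : nat, f n <> 0) -> f 0%N = 1) /\
     (forall a : nat, f (q * a)%N = f a)).
Proof.
have q0 : (0 < q)%N by apply: leq_trans hq.
have key : forall r a, (q ^ (1 + r) * a + 0 = q ^ (0 + r) * (q * a) + 0)%N.
  by move=> r a; rewrite add0n addn0 addn0 expnS mulnA (mulnC q).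
split.
- move=> f [r H].
  have h0 : f 0%N = 0.
    have := H 0%N 0%N 0%N; rewrite expn0 muln0 => /(_ isT) /eqP.
    by rewrite -subr_eq0 opprD addrA subrr sub0r oppr_eq0 => /eqP.
  split => // a.
  have := H a 0%N 1%N; rewrite expn1 => /(_ q0).
  rewrite key H ?expn0 // h0 !addr0 //.
- move=> f [r H].
  have z : f 0%N = 0 -> forall n, f n = 0.
    move=> h n; have := H 0%N n n (@ltn_expn q n hq).
    by rewrite muln0 add0n h mul0r.
  have h01 : f 0%N = 0 \/ f 0%N = 1.
    have := H 0%N 0%N 0%N; rewrite expn0 muln0 => /(_ isT) /eqP.
    rewrite -subr_eq0 -{1}(mulr1 (f 0%N)) -mulrBr mulf_eq0 subr_eq0.
    by case/orP => /eqP ->; [left|right].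
  split.
    by move=> [n hn]; case: h01 => // h; case: hn; apply: z.
  move=> a; case: h01 => h; first by rewrite (z h) (z h).
  have := H a 0%N 1%N; rewrite expn1 => /(_ q0).
  by rewrite key H ?expn0 // h !mulr1.
Qed.
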